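(* Let $1\le i\le n-1$. The map $\mathfrak S_i(1243,2143)\times\mathfrak S_{n-i}(1243,2143)\to\mathfrak S_n(1243,2143)$, $(\pi_1,\pi_2)\mapsto\pi_1*\pi_2$, is a bijection onto the set of $\pi\in\mathfrak S_n(1243,2143)$ with $\pi(i+1)=n$. Moreover, for all $k\ge1$, $\pi_1\in\mathfrak S_i(1243,2143)$, $\pi_2\in\mathfrak S_{n-i}(1243,2143)$, $$\tau_k(\pi_1*\pi_2)=\tau_k(\pi_1)+\tau_{k-1}(\pi_1)+\tau_k(\pi_2).$$
   Context: $\mathfrak S_m(R)$ is the set of permutations of $\{1,\dots,m\}$ avoiding every pattern in $R$ (no subsequence with the same relative order as a pattern). $\tau_k(\pi)$ is the number of increasing subsequences of length $k$ in $\pi$ for $k\ge1$, and $\tau_0(\pi)=0$. For nonempty permutations $\pi_1,\pi_2$: let $\tilde\pi_1$ be obtained by adding $|\pi_2|-1$ to every entry of $\pi_1$ and then replacing the entry equal to $|\pi_2|$ by the first entry of $\pi_2$; let $\tilde\pi_2$ be $\pi_2$ with its first entry deleted; then $\pi_1*\pi_2=\tilde\pi_1,\ N,\ \tilde\pi_2$ (concatenation) where $N=|\pi_1|+|\pi_2|$. E.g. $3124*15342=716895342$. *)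

(* Defs.v *)
From mathcomp Require Import all_boot.
Set Implicit Arguments. Unset Strict Implicit. Unset Printing Implicit Defensive.

Definition is_perm (m : nat) (s : seq nat) : Prop := perm_eq s (iota 1 m).

Definition order_iso (t p : seq nat) : bool :=
  (size t == size p) &&
  [forall i : 'I_(size p), forall j : 'I_(size p),
     (nth 0 t i < nth 0 t j) == (nth 0 p i < nth 0 p j)].

Definition contains (s p : seq nat) : Prop :=
  exists t : seq nat, subseq t s /\ order_iso t p.

Definition avoids (s : seq nat) (R : seq (seq nat)) : Prop :=
  forall p, p \in R -> ~ contains s p.

Definition in_Sav (m : nat) (R : seq (seq nat)) (s : seq nat) : Prop :=
  is_perm m s /\ avoids s R.

(* tau_k: number of increasing subsequences of length k (k >= 1), tau_0 = 0.
   A subsequence is given by its set of positions. *)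
Definition tau (k : nat) (s : seq nat) : nat :=
  if k == 0 then 0 else
  #|[set S : {set 'I_(size s)} | (#|S| == k) &&
      [forall i in S, forall j in S, (i < j) ==> (nth 0 s i < nth 0 s j)]]|.

Definition star (p1 p2 : seq nat) : seq nat :=
  let b := size p2 in
  map (fun x => let y := x + (b - 1) in if y == b then head 0 p2 else y) p1
  ++ (size p1 + size p2) :: behead p2.

Definition R12 : seq (seq nat) := [:: [:: 1; 2; 4; 3]; [:: 2; 1; 4; 3]].

(* Main.v *)
Require Import Defs.
From mathcomp Require Import all_boot zify.
Set Implicit Arguments. Unset Strict Implicit. Unset Printing Implicit Defensive.


Fixpoint g (k lo : nat) (s : seq nat) : nat :=
  match k with
  | 0 => 1
  | k'.+1 => match s with
             | [::] => 0
             | x :: s' => (if lo < x then g k' x s' else 0) + g k'.+1 lo s'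
             end
  end.

Definition incr (s : seq nat) (S : {set 'I_(size s)}) : bool :=
  [forall i in S, forall j in S, (i < j) ==> (nth 0 s i < nth 0 s j)].
Definition allgt (lo : nat) (s : seq nat) (S : {set 'I_(size s)}) : bool :=
  [forall i in S, lo < nth 0 s i].

Definition Tc k lo (s : seq nat) : nat :=
  \sum_(S : {set 'I_(size s)}) ((#|S| == k) && incr S && allgt lo S : nat).

Lemma forall_imset (aT rT : finType) (f : aT -> rT) (A : {set aT}) (Q : pred rT) :
  [forall y in f @: A, Q y] = [forall x in A, Q (f x)].
Proof.
apply/forallP/forallP => H.
  move=> x; apply/implyP => xA; have := H (f x); rewrite imset_f //.
move=> y; apply/implyP => /imsetP [x xA ->]; by have /implyP := H x; apply.
Qed.

Lemma forall_setU1 (T : finType) (a : T) (A : {set T}) (Q : pred T) :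
  [forall y in a |: A, Q y] = Q a && [forall y in A, Q y].
Proof.
apply/forallP/andP => [H|[Qa H]].
  split; first by have := H a; rewrite setU11.
  apply/forallP => y; apply/implyP => yA; have := H y; rewrite in_setU yA orbT; by [].
move=> y; apply/implyP; rewrite in_setU1 => /orP [/eqP -> //|yA].
by move/forallP: H => /(_ y) /implyP; apply.
Qed.

Section Bij.
Variable n : nat.
Definition phi (S : {set 'I_n}) : {set 'I_n.+1} := [set lift ord0 j | j in S].
Definition beta (p : bool * {set 'I_n}) : {set 'I_n.+1} :=
  if p.1 then ord0 |: phi p.2 else phi p.2.
Definition gamma (S : {set 'I_n.+1}) : bool * {set 'I_n} :=
  (ord0 \in S, [set j | lift ord0 j \in S]).

Lemma lift_neq0 (j : 'I_n) : (lift ord0 j == ord0) = false.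
Proof. by rewrite eq_sym (negbTE (neq_lift _ _)). Qed.

Lemma ord0_phi S : ord0 \notin phi S.
Proof. apply/imsetP => [[j _ /eqP]]; by rewrite (negbTE (neq_lift _ _)). Qed.

Lemma mem_phi S j : (lift ord0 j \in phi S) = (j \in S).
Proof. by rewrite mem_imset //; apply: lift_inj. Qed.

Lemma beta_bij : bijective beta.
Proof.
exists gamma.
  move=> [b S]; rewrite /gamma /beta /=; case: b => /=.
    rewrite setU11; congr pair; apply/setP => j; rewrite !inE.
    by rewrite lift_neq0 /= mem_phi.
  rewrite (negbTE (ord0_phi S)); congr pair; apply/setP => j.
  by rewrite inE mem_phi.
move=> S; rewrite /gamma /beta /=; apply/setP => i.
case: (unliftP ord0 i) => [j ->|->].
  case: ifP => _; rewrite ?inE ?lift_neq0 /= mem_phi inE //.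
by case: ifP => H; rewrite ?setU11 ?(negbTE (ord0_phi _)) ?H.
Qed.
End Bij.

Lemma card_phi n (S : {set 'I_n}) : #|phi S| = #|S|.
Proof. by rewrite card_imset //; apply: lift_inj. Qed.

Lemma nth_lift0 x s n (j : 'I_n) : nth 0 (x :: s) (lift ord0 j) = nth 0 s j.
Proof. by rewrite lift0. Qed.

Lemma Tc0 lo s : Tc 0 lo s = 1.
Proof.
rewrite /Tc (bigD1 set0) //= cards0 /=.
have -> : incr (set0 : {set 'I_(size s)}) by apply/forallP => i; rewrite inE.
have -> : allgt lo (set0 : {set 'I_(size s)}) by apply/forallP => i; rewrite inE.
rewrite big1 // => S SN; by rewrite cards_eq0 (negbTE SN).
Qed.

Lemma Tc_nil k lo : Tc k.+1 lo [::] = 0.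
Proof.
rewrite /Tc big1 // => S _.
have : #|S| <= #|'I_0| by apply: max_card.
by rewrite card_ord leqn0 => /eqP ->.
Qed.

Lemma incrP s (S : {set 'I_(size s)}) :
  reflect (forall i j, i \in S -> j \in S -> i < j -> nth 0 s i < nth 0 s j) (incr S).
Proof.
apply: (iffP forallP) => H.
  move=> i j iS jS ij; move: (H i); rewrite iS /= => /forallP /(_ j).
  by rewrite jS ij.
move=> i; apply/implyP => iS; apply/forallP => j; apply/implyP => jS.
by apply/implyP; apply: H.
Qed.

Lemma allgtP lo s (S : {set 'I_(size s)}) :
  reflect (forall i, i \in S -> lo < nth 0 s i) (allgt lo S).
Proof.
apply: (iffP forallP) => H.
  by move=> i iS; move: (H i); rewrite iS.
by move=> i; apply/implyP; apply: H.
Qed.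

Lemma incr_phi x s (S : {set 'I_(size s)}) :
  @incr (x :: s) (phi S) = incr S.
Proof.
apply/incrP/incrP => H.
  move=> i j iS jS ij; have := H (lift ord0 i) (lift ord0 j).
  by rewrite !mem_phi !lift0 ltnS /=; apply.
move=> i j /imsetP [i' i'S ->] /imsetP [j' j'S ->]; rewrite !lift0 ltnS /=.
by apply: H.
Qed.

Lemma allgt_phi lo x s (S : {set 'I_(size s)}) :
  @allgt lo (x :: s) (phi S) = allgt lo S.
Proof.
apply/allgtP/allgtP => H.
  by move=> i iS; have := H (lift ord0 i); rewrite mem_phi lift0 /=; apply.
by move=> i /imsetP [i' i'S ->]; rewrite lift0 /=; apply: H.
Qed.

Lemma incr_psi x s (S : {set 'I_(size s)}) :
  @incr (x :: s) (ord0 |: phi S) = allgt x S && incr S.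
Proof.
apply/incrP/andP => [H|[/allgtP H1 /incrP H2]].
  split.
    apply/allgtP => i iS; have := H ord0 (lift ord0 i).
    by rewrite setU11 in_setU1 mem_phi iS orbT lift0 /=; apply.
  apply/incrP => i j iS jS ij; have := H (lift ord0 i) (lift ord0 j).
  by rewrite !in_setU1 !mem_phi iS jS !orbT !lift0 ltnS /=; apply.
move=> i j; rewrite !in_setU1 => /orP [/eqP ->|/imsetP [i' i'S ->]] /orP [/eqP ->|/imsetP [j' j'S ->]] //.
  by rewrite lift0 /= => _; apply: H1.
by rewrite !lift0 ltnS /=; apply: H2.
Qed.

Lemma allgt_psi lo x s (S : {set 'I_(size s)}) :
  @allgt lo (x :: s) (ord0 |: phi S) = (lo < x) && allgt lo S.
Proof. by rewrite /allgt forall_setU1 -/(allgt _ _) allgt_phi. Qed.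

Lemma allgt_trans lo x s (S : {set 'I_(size s)}) : lo < x -> allgt x S -> allgt lo S.
Proof.
move=> lx /allgtP H; apply/allgtP => i iS; apply: ltn_trans lx (H i iS).
Qed.

Lemma Tc_cons k lo x s : Tc k.+1 lo (x :: s) = (if lo < x then Tc k x s else 0) + Tc k.+1 lo s.
Proof.
rewrite /Tc (reindex (@beta (size s))); last by apply: onW_bij; apply: beta_bij.
set F := fun S : {set 'I_(size (x :: s))} => ((#|S| == k.+1) && incr S && allgt lo S : nat).
rewrite (eq_bigr (fun p => F (@beta (size s) (p.1, p.2)))); last by case.
rewrite -(pair_big xpredT xpredT (fun b S => F (@beta (size s) (b, S)))) /=.
rewrite big_bool /= /F /beta /=.
congr addn.
  case: ifP => lox; last first.
    apply: big1 => S _.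
    by rewrite allgt_psi lox /= andbF.
  rewrite /Tc; apply: eq_bigr => S _.
  rewrite cardsU1 ord0_phi card_phi /= eqSS incr_psi allgt_psi lox /=.
  case: (boolP (allgt x S)) => H; rewrite /= ?andbF //.
  by rewrite (allgt_trans lox H) !andbT.
apply: eq_bigr => S _.
by rewrite card_phi incr_phi allgt_phi.
Qed.

Lemma Tc_g k lo s : Tc k lo s = g k lo s.
Proof.
elim: s k lo => [|x s IH] [|k] lo; rewrite ?Tc0 ?Tc_nil //.
by rewrite Tc_cons /= !IH.
Qed.

Lemma tau_g k s : all (fun x => 0 < x) s -> tau k.+1 s = g k.+1 0 s.
Proof.
move=> /allP Hs; rewrite -Tc_g /tau /Tc /=.
rewrite -sum1_card big_mkcond /=; apply: eq_bigr => S _; rewrite inE.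
have -> : allgt 0 S by apply/allgtP => i _; apply: Hs; apply: mem_nth.
by rewrite andbT; case: (_ && _).
Qed.


Lemma g0 lo s : g 0 lo s = 1. Proof. by case: s. Qed.

Lemma g_big k lo s : (forall x, x \in s -> x <= lo) -> g k.+1 lo s = 0.
Proof.
elim: s => [//|x s IH] H /=.
rewrite IH; last by move=> y ys; apply: H; rewrite inE ys orbT.
have := H x (mem_head _ _); case: ltnP => //; lia.
Qed.

Lemma g_map (P : pred nat) (f : nat -> nat) :
  {in P &, {mono f : x y / x < y}} ->
  forall k s lo lo', all P s -> (forall x, P x -> (lo < x) = (lo' < f x)) ->
  g k lo s = g k lo' (map f s).
Proof.
move=> Hf k s; elim: s k => [|x s IH] [|k] lo lo' //= /andP [Px Ps] Hl.
rewrite -Hl //; congr addn; last by apply: IH.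
case: ifP => // _; apply: IH => // y Py; by rewrite Hf.
Qed.

Lemma g_star h m N C : h <= m -> m < N -> (forall y, y \in C -> y <= m) ->
  forall A, uniq A -> (forall x, x \in A -> (x == h) || (m < x < N)) ->
  forall k lo, lo < N ->
  g k.+1 lo (A ++ N :: C) = g k.+1 lo A + g k lo A + g k.+1 lo C +
     (if (h \in A) && (lo < h) && (0 < k) then g k h C else 0).
Proof.
move=> hm mN HC; elim => [|x A IH] UA HA k lo loN.
  rewrite /= loN /= add0n; case: k => [|k] /=; first by rewrite !g0; lia.
  rewrite g_big //; last by move=> y /HC; lia.
  by rewrite addn0.
have xA : x \notin A by case/andP: UA.
have UA' : uniq A by case/andP: UA.
have HA' : forall y, y \in A -> (y == h) || (m < y < N).
  by move=> y yA; apply: HA; rewrite inE yA orbT.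
have Hx := HA x (mem_head _ _).
have xN : x < N by move: Hx => /orP [/eqP ->|]; lia.
rewrite cat_cons [g _ _ (x :: _)]/= IH //.
case: k => [|j].
  rewrite /= !andbF /= !g0; lia.
rewrite [g j.+1 x _]IH //.
case/orP: Hx => [/eqP xh|Hx].
  subst x; rewrite (negbTE xA) /= mem_head /=.
  rewrite ltn0Sn andbT; case: (ltnP lo h) => _ /=; lia.
rewrite [g j.+1 x C]g_big; last by move=> y /HC; lia.
have -> : (x < h) = false by lia.
rewrite in_cons.
have -> : (h == x) = false by apply/eqP => hx; lia.
rewrite /= ltn0Sn !andbT !andbF; case: (ltnP lo x) => _ /=; set M := (if _ then _ else _); lia.
Qed.


Definition bad (s : seq nat) := exists a b c d,
  subseq [:: a; b; c; d] s /\ a < d /\ b < d /\ d < c.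

Lemma iso_bad t p : p \in R12 -> order_iso t p ->
  exists a b c d, t = [:: a; b; c; d] /\ a < d /\ b < d /\ d < c.
Proof.
rewrite /R12 !inE => Hp /andP [/eqP st /forallP H].
have Hs : size p = 4 by case/orP: Hp => /eqP ->.
move: st H; rewrite Hs.
case: t => [|a [|b [|c [|d [|e t]]]]] //= _ H.
exists a, b, c, d; split => //.
have H03 := forallP (H (@Ordinal 4 0 isT)) (@Ordinal 4 3 isT).
have H13 := forallP (H (@Ordinal 4 1 isT)) (@Ordinal 4 3 isT).
have H32 := forallP (H (@Ordinal 4 3 isT)) (@Ordinal 4 2 isT).
move: H03 H13 H32 => /=.
by case/orP: Hp => /eqP -> /= /eqP -> /eqP -> /eqP ->.
Qed.

Lemma bad_iso a b c d : a < d -> b < d -> d < c -> a != b ->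
  exists2 p, p \in R12 & order_iso [:: a; b; c; d] p.
Proof.
move=> ad bd dc ab.
case: (ltnP a b) => Hab.
  exists [:: 1; 2; 4; 3]; first by rewrite !inE.
  rewrite /order_iso /=; apply/forallP => i; apply/forallP => j.
  case: i => [[|[|[|[|i]]]] Hi] //=; case: j => [[|[|[|[|j]]]] Hj] //=; apply/eqP; lia.
exists [:: 2; 1; 4; 3]; first by rewrite !inE.
have Hab' : b < a by rewrite ltn_neqAle eq_sym ab Hab.
rewrite /order_iso /=; apply/forallP => i; apply/forallP => j.
case: i => [[|[|[|[|i]]]] Hi] //=; case: j => [[|[|[|[|j]]]] Hj] //=; apply/eqP; lia.
Qed.

Lemma avoids_bad s : uniq s -> (avoids s R12 <-> ~ bad s).
Proof.
move=> Us; split.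
  move=> Hav [a [b [c [d [sub [ad [bd dc]]]]]]].
  have U4 := subseq_uniq sub Us.
  have ab : a != b by move: U4; rewrite /= !inE; case: (a == b).
  have [p pR iso] := bad_iso ad bd dc ab.
  by apply: (Hav p pR); exists [:: a; b; c; d].
move=> Hb p pR [t [sub iso]].
have [a [b [c [d [Et rel]]]]] := iso_bad pR iso.
by apply: Hb; exists a, b, c, d; rewrite -Et.
Qed.

Lemma subseq_cat_split (t A B : seq nat) : subseq t (A ++ B) ->
  exists t1 t2, t = t1 ++ t2 /\ subseq t1 A /\ subseq t2 B.
Proof.
case/subseqP => m sm ->.
exists (mask (take (size A) m) A), (mask (drop (size A) m) B).
split; last by split; apply: mask_subseq.
rewrite -mask_cat ?cat_take_drop // size_take; move: sm; rewrite size_cat.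
case: ltnP => // h2 h3; apply/eqP; rewrite eqn_leq h2 h3 leq_addr //.
Qed.

Lemma subseq_map_inv (f : nat -> nat) t s : subseq t (map f s) ->
  exists t', t = map f t' /\ subseq t' s.
Proof.
case/subseqP => m sm ->; exists (mask m s); split; last exact: mask_subseq.
by rewrite map_mask.
Qed.

Lemma bad_map (P : pred nat) (f : nat -> nat) s :
  {in P &, {mono f : x y / x < y}} -> all P s -> bad (map f s) -> bad s.
Proof.
move=> Hf /allP Ps [a [b [c [d [sub [ad [bd dc]]]]]]].
have [t' [Et sub']] := subseq_map_inv sub.
move: Et; case: t' sub' => [|a' [|b' [|c' [|d' [|e' t']]]]] //= sub' [Ea Eb Ec Ed].
subst.
have Pa : P a' by apply: Ps; apply: (mem_subseq sub'); rewrite !inE eqxx.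
have Pb : P b' by apply: Ps; apply: (mem_subseq sub'); rewrite !inE eqxx !orbT.
have Pc : P c' by apply: Ps; apply: (mem_subseq sub'); rewrite !inE eqxx !orbT.
have Pd : P d' by apply: Ps; apply: (mem_subseq sub'); rewrite !inE eqxx !orbT.
exists a', b', c', d'; split => //.
by rewrite -(Hf _ _ Pa Pd) -(Hf _ _ Pb Pd) -(Hf _ _ Pd Pc).
Qed.

Lemma bad_subseq s s' : subseq s s' -> bad s -> bad s'.
Proof.
move=> ss [a [b [c [d [sub rel]]]]]; exists a, b, c, d; split => //.
exact: subseq_trans sub ss.
Qed.

Lemma subseq2 (x y : nat) (s : seq nat) : x \in s -> y \in s -> x != y ->
  subseq [:: x; y] s \/ subseq [:: y; x] s.
Proof.
elim: s => [//|w s IH]; rewrite !inE => xs ys xy.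
case: (eqVneq x w) => [exw|xw].
  subst w; left; rewrite /= eqxx sub1seq; move: ys; rewrite eq_sym (negbTE xy) //.
case: (eqVneq y w) => [eyw|yw].
  subst w; right; rewrite /= eqxx sub1seq; move: xs; rewrite (negbTE xw) //.
move: xs ys; rewrite (negbTE xw) (negbTE yw) /= => xs ys.
case: (IH xs ys xy) => H; [left|right]; exact: (subseq_trans H (subseq_cons _ _)).
Qed.


Definition fstar (m h x : nat) := if x + (m - 1) == m then h else x + (m - 1).

Lemma star_eq p1 p2 : star p1 p2 =
  map (fstar (size p2) (head 0 p2)) p1 ++ (size p1 + size p2) :: behead p2.
Proof. by []. Qed.

Lemma perm_facts m s : is_perm m s ->
  [/\ uniq s, size s = m & forall x, x \in s -> 0 < x <= m].
Proof.
move=> P; split.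
- by rewrite (perm_uniq P) iota_uniq.
- by rewrite (perm_size P) size_iota.
- by move=> x; rewrite (perm_mem P) mem_iota; lia.
Qed.

Lemma perm_of s a k : uniq s -> size s = k ->
  (forall x, x \in s -> a <= x < a + k) -> perm_eq s (iota a k).
Proof.
move=> Us Sk R; apply: uniq_perm => //; first exact: iota_uniq.
have [] := @uniq_min_size _ s (iota a k) Us.
- by move=> x /R; rewrite mem_iota.
- by rewrite size_iota Sk.
by [].
Qed.

Lemma fstar_mono m h : 1 <= m -> 1 <= h <= m ->
  {in [pred x | 0 < x] &, {mono fstar m h : x y / x < y}}.
Proof.
move=> m1 hm x y; rewrite !inE => x0 y0; rewrite /fstar.
case: (eqVneq (x + (m - 1)) m) => [H1|/eqP H1]; case: (eqVneq (y + (m - 1)) m) => [H2|/eqP H2].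
- by rewrite ltnn; symmetry; apply/negbTE; lia.
- by apply/idP/idP; lia.
- by apply/idP/idP; lia.
- by rewrite ltn_add2r.
Qed.

Lemma ltn_mono_inj (P : pred nat) (f : nat -> nat) :
  {in P &, {mono f : x y / x < y}} -> {in P &, injective f}.
Proof.
move=> H x y xP yP E.
have h1 := H x y xP yP. have h2 := H y x yP xP.
rewrite E (ltnn (f y)) in h1 h2.
by move: h1 h2; case: ltngtP.
Qed.

Lemma fstar_range m h i x : 1 <= m -> 1 <= h <= m -> 0 < x <= i ->
  (fstar m h x == h) || (m < fstar m h x < i + m).
Proof.
move=> m1 hm xi; rewrite /fstar; case: ifP => H; first by rewrite eqxx.
apply/orP; right; lia.
Qed.

Lemma fstar1 m h : 1 <= m -> fstar m h 1 = h.
Proof. by move=> m1; rewrite /fstar; case: ifP => // /eqP; lia. Qed.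

Lemma star_wd i m p1 p2 : 1 <= i -> 1 <= m ->
  in_Sav i R12 p1 -> in_Sav m R12 p2 ->
  in_Sav (i + m) R12 (star p1 p2) /\ nth 0 (star p1 p2) i = i + m.
Proof.
move=> i1 m1 [P1 A1] [P2 A2].
have [U1 S1 R1] := perm_facts P1.
have [U2 S2 R2] := perm_facts P2.
set h := head 0 p2; set C := behead p2.
have Ep2 : p2 = h :: C by rewrite /h /C; move: S2; clear -m1; case: p2 => //=; lia.
have hR : 0 < h <= m by apply: R2; rewrite Ep2 mem_head.
have CR : forall y, y \in C -> 0 < y <= m by move=> y yC; apply: R2; rewrite Ep2 inE yC orbT.
have hC : h \notin C by move: U2; rewrite Ep2 => /andP [].
have UC : uniq C by move: U2; rewrite Ep2 => /andP [].
set f := fstar m h.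
set A := map f p1.
have Es : star p1 p2 = A ++ (i + m) :: C by rewrite star_eq S1 S2.
have AR : forall x, x \in A -> (x == h) || (m < x < i + m).
  by move=> x /mapP [y yp ->]; apply: fstar_range => //; apply: R1.
have UA : uniq A.
  rewrite map_inj_in_uniq // => x y xp yp.
  apply: (ltn_mono_inj (fstar_mono m1 hR)); rewrite inE; [case/andP: (R1 x xp)|case/andP: (R1 y yp)] => //.
have Us : uniq (star p1 p2).
  rewrite Es cat_uniq UA /=; apply/and3P; split => //.
  - apply/norP; split.
      by apply/negP => /AR; case/orP => [/eqP|]; lia.
    apply/hasPn => y yC; apply/negP => /AR /orP [/eqP yh|]; last by have := CR y yC; lia.
    by move: hC; rewrite -yh yC.
  - by apply/negP => /CR; lia.
split; last by rewrite Es nth_cat /A size_map S1 ltnn subnn.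
split.
  apply: perm_of => //; first by rewrite Es size_cat /A size_map S1 /= size_behead S2; lia.
  move=> x; rewrite Es mem_cat inE => /orP [/AR|/orP [/eqP ->|/CR]]; lia.
apply: (proj2 (avoids_bad Us)) => [[a [b [c [d [sub [ad [bd dc]]]]]]]].
have U4 := subseq_uniq sub Us.
have ab : a != b by move: U4; rewrite /= !inE; case: (a == b).
have sR : forall z, z \in star p1 p2 -> z <= i + m.
  move=> z; rewrite Es mem_cat inE => /orP [/AR|/orP [/eqP ->|/CR]]; lia.
have cR : c <= i + m by apply: sR; apply: (mem_subseq sub); rewrite !inE eqxx ?orbT.
move: sub; rewrite Es => /subseq_cat_split [t1 [t2 [Et [s1 s2]]]].
have badp1 : ~ bad p1 by apply: (proj1 (avoids_bad U1)).
have badp2 : ~ bad p2 by apply: (proj1 (avoids_bad U2)).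
have Hd : d \in t2 -> d \in C.
  move=> dt; have := mem_subseq s2 dt; rewrite inE => /orP [/eqP|] //; lia.
have HA2 : forall u v, u \in A -> v \in A -> u < d -> v < d -> d \in C -> u = v.
  have H1 : forall u, u \in A -> u < d -> d \in C -> u = h.
    move=> u uA ud dC; have := CR d dC.
    case/orP: (AR u uA) => [/eqP -> //|Hu] Hd'.
    move: Hu Hd' ud; clear; lia.
  move=> u v uA vA ud vd dC; rewrite (H1 u uA ud dC); symmetry; exact: (H1 v vA vd dC).
case: t1 Et s1 => [|a1 [|b1 [|c1 [|d1 [|e1 t1]]]]] /= Et s1.
- subst t2; apply: badp2; exists a, b, c, d; split => //.
  move: s2; rewrite /= [a == _]eq_sym; case: eqP => [Ea|_]; first by move: Ea ad dc cR; clear; lia.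
  by move=> s2; rewrite Ep2; apply: subseq_trans s2 (subseq_cons _ _).
- case: Et => ? Et; subst a1 t2.
  have aA : a \in A by move: s1; rewrite sub1seq.
  have dC : d \in C by apply: Hd; rewrite !inE eqxx ?orbT.
  have ah : a = h.
    case/orP: (AR a aA) => [/eqP //|Ha]; have := CR d dC; move: Ha ad; clear; lia.
  apply: badp2; exists a, b, c, d; split => //.
  move: s2; rewrite /= [b == _]eq_sym; case: eqP => [Eb|_]; first by move: Eb bd dc cR; clear; lia.
  by move=> s2; rewrite Ep2 ah /= eqxx.
- case: Et => ? ? Et; subst a1 b1 t2.
  have aA : a \in A by apply: (mem_subseq s1); rewrite !inE eqxx.
  have bA : b \in A by apply: (mem_subseq s1); rewrite !inE eqxx orbT.
  have dC : d \in C by apply: Hd; rewrite !inE eqxx ?orbT.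
  by move: ab; rewrite (HA2 a b aA bA ad bd dC) eqxx.
- case: Et => ? ? ? Et; subst a1 b1 c1 t2.
  have aA : a \in A by apply: (mem_subseq s1); rewrite !inE eqxx.
  have bA : b \in A by apply: (mem_subseq s1); rewrite !inE eqxx orbT.
  have dC : d \in C by apply: Hd; rewrite !inE eqxx ?orbT.
  by move: ab; rewrite (HA2 a b aA bA ad bd dC) eqxx.
- case: Et => ? ? ? ? Et; subst a1 b1 c1 d1 t2.
  apply: badp1; apply: (bad_map (fstar_mono m1 hR)).
    by apply/allP => x /R1; rewrite inE; case/andP.
  by exists a, b, c, d.
- by [].
Qed.


Lemma map_inj_pos (P : pred nat) (f : nat -> nat) : {in P &, injective f} ->
  forall s t, all P s -> all P t -> map f s = map f t -> s = t.
Proof.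
move=> Hf; elim => [|x s IH] [|y t] //= /andP [Px Ps] /andP [Py Pt] [Exy Est].
by rewrite (Hf _ _ Px Py Exy) (IH t).
Qed.

Lemma perm_cons_head (x y : nat) (C : seq nat) : perm_eq (x :: C) (y :: C) -> x = y.
Proof.
move/permP/(_ (pred1 x)) => /=; rewrite eqxx; case: eqP => // _ /eqP.
by rewrite eqn_add2r.
Qed.

Lemma star_inj i m p1 p2 q1 q2 : 1 <= i -> 1 <= m ->
  in_Sav i R12 p1 -> in_Sav m R12 p2 -> in_Sav i R12 q1 -> in_Sav m R12 q2 ->
  star p1 p2 = star q1 q2 -> p1 = q1 /\ p2 = q2.
Proof.
move=> i1 m1 [P1 _] [P2 _] [Q1 _] [Q2 _].
have [U1 S1 R1] := perm_facts P1.
have [U2 S2 R2] := perm_facts P2.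
have [V1 T1 W1] := perm_facts Q1.
have [V2 T2 W2] := perm_facts Q2.
have Ep2 : p2 = head 0 p2 :: behead p2 by move: S2; clear -m1; case: p2 => //=; lia.
have Eq2 : q2 = head 0 q2 :: behead q2 by move: T2; clear -m1; case: q2 => //=; lia.
rewrite !star_eq S1 S2 T1 T2 => /eqP; rewrite eqseq_cat ?size_map ?S1 ?T1 //.
case/andP => /eqP Em /eqP [EC].
have Eh : head 0 p2 = head 0 q2.
  have P12 : perm_eq p2 q2 by apply: perm_trans P2 _; rewrite perm_sym.
  apply: (@perm_cons_head _ _ (behead p2)); rewrite -Ep2 EC -Eq2 //.
have Hp2 : p2 = q2 by rewrite Ep2 Eq2 Eh EC.
split => //.
move: Em; rewrite Eh.
have hR : 0 < head 0 q2 <= m by apply: W2; rewrite Eq2 mem_head.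
apply: (map_inj_pos (ltn_mono_inj (fstar_mono m1 hR))).
  by apply/allP => x /R1; rewrite inE; case/andP.
by apply/allP => x /W1; rewrite inE; case/andP.
Qed.


Lemma exists_min (s : seq nat) : s != [::] ->
  exists2 h, h \in s & forall x, x \in s -> h <= x.
Proof.
elim: s => [//|y s IH] _.
case: (eqVneq s [::]) => [->|sn].
  by exists y; rewrite ?mem_head // => x; rewrite inE => /eqP ->.
have [h hs Hh] := IH sn.
case: (leqP y h) => yh.
  exists y; first exact: mem_head.
  move=> x; rewrite inE => /orP [/eqP -> //|xs]; exact: leq_trans yh (Hh x xs).
exists h; first by rewrite inE hs orbT.
move=> x; rewrite inE => /orP [/eqP ->|xs]; [exact: ltnW|exact: Hh].
Qed.

Definition gfun (m h x : nat) := if x == h then 1 else x - (m - 1).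

Lemma gfun_mono m h : 1 <= m -> h <= m ->
  {in [pred x | (x == h) || (m < x)] &, {mono gfun m h : x y / x < y}}.
Proof.
move=> m1 hm x y; rewrite !inE /gfun.
case: (eqVneq x h) => [->|xh]; case: (eqVneq y h) => [->|yh] //= Hx Hy;
  move: hm m1 Hx Hy; clear; move=> hm m1 Hx Hy; apply/idP/idP; lia.
Qed.

Lemma star_surj i m pi : 1 <= i -> 1 <= m -> in_Sav (i + m) R12 pi ->
  nth 0 pi i = i + m ->
  exists p1 p2, in_Sav i R12 p1 /\ in_Sav m R12 p2 /\ star p1 p2 = pi.
Proof.
move=> i1 m1 [P Av] Hn.
have [U S R] := perm_facts P.
have badpi : ~ bad pi := proj1 (avoids_bad U) Av.
set N := i + m.
set A0 := take i pi; set C := drop i.+1 pi.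
have iN : i < size pi by rewrite S /N; move: m1; clear; lia.
have Epi : pi = A0 ++ N :: C.
  by rewrite -{1}(cat_take_drop i pi) (drop_nth 0 iN) Hn.
have SA : size A0 = i by rewrite size_takel // ltnW.
have SC : size C = m.-1 by rewrite size_drop S /N; move: m1; clear; lia.
have Upi := U; rewrite Epi cat_uniq /= in Upi.
case/and3P: Upi => UA /norP [NA hasC] /andP [NC UC].
have disj : forall x, x \in A0 -> x \notin C.
  by move=> x xA; apply/negP => xC; move/hasPn: hasC => /(_ x xC); rewrite xA.
have RA : forall x, x \in A0 -> 0 < x < N.
  move=> x xA; have := R x; rewrite Epi mem_cat xA => /(_ isT).
  have : x != N by apply/eqP => E; move: NA; rewrite -E xA.
  move=> /eqP; clear; lia.
have RC : forall x, x \in C -> 0 < x < N.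
  move=> x xC; have := R x; rewrite Epi mem_cat inE xC !orbT => /(_ isT).
  have : x != N by apply/eqP => E; move: NC; rewrite -E xC.
  move=> /eqP; clear; lia.
have An : A0 != [::] by rewrite -size_eq0 SA; move: i1; clear; lia.
have [h hA hmin] := exists_min An.
have key : forall x z, x \in A0 -> x != h -> z \in C -> z < x.
  move=> x z xA xh zC; case: (ltngtP z x) => // Hxz; last first.
    by move: (disj x xA); rewrite -Hxz zC.
  have hx : h < x by rewrite ltn_neqAle eq_sym xh hmin.
  exfalso; apply: badpi.
  have zN : z < N by case/andP: (RC z zC).
  have sNz : subseq [:: N; z] (N :: C) by rewrite /= eqxx sub1seq.
  case: (subseq2 hA xA (negbT (introF eqP (fun E => (negP xh) (introT eqP (esym E)))))) => s2.
    exists h, x, N, z; split; last by split; [exact: ltn_trans hx Hxz|split].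
    rewrite Epi; exact: (cat_subseq s2 sNz).
  exists x, h, N, z; split; last by split; [|split; [exact: ltn_trans hx Hxz|]].
  rewrite Epi; exact: (cat_subseq s2 sNz).
set B := h :: C.
set D := rem h A0.
have PD : perm_eq A0 (h :: D) by apply: perm_to_rem.
have memD : forall x, x \in D -> (x \in A0) && (x != h).
  by move=> x; rewrite /D (mem_rem_uniq h UA) inE andbC.
have DB : forall x y, x \in D -> y \in B -> y < x.
  move=> x y /memD /andP [xA xh]; rewrite inE => /orP [/eqP ->|yC].
    by rewrite ltn_neqAle eq_sym xh hmin.
  exact: key.
have UD : uniq D by rewrite /D rem_uniq.
have SD : size D = i.-1 by rewrite /D size_rem // SA.
have UB : uniq B by rewrite /B /= disj.
have SB : size B = m by rewrite /B /= SC; move: m1; clear; lia.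
have PB : perm_eq B (iota 1 m).
  apply: perm_of => // y yB.
  have yN : 0 < y < N by move: yB; rewrite inE => /orP [/eqP ->|/RC //]; apply: RA.
  have : size D <= size (iota y.+1 (N - y.+1)).
    apply: uniq_leq_size => // x xD; rewrite mem_iota.
    have := DB x y xD yB; have : x < N by case/andP: (memD x xD) => /RA /andP [].
    move: yN; clear; lia.
  rewrite size_iota SD /N; move: yN i1 m1; rewrite /N; clear; lia.
have mB : m \in B by rewrite (perm_mem PB) mem_iota; move: m1; clear; lia.
have RD : forall x, x \in D -> m < x < N.
  move=> x xD; rewrite (DB x m xD mB) /=.
  by case/andP: (memD x xD) => /RA /andP [].
have hm : h <= m by have := perm_mem PB h; rewrite mem_head mem_iota => /esym /andP [].
have PA : forall x, x \in A0 -> (x == h) || (m < x).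
  move=> x xA; case: (eqVneq x h) => //= xh.
  have xD : x \in D by rewrite /D (mem_rem_uniq h UA) inE xh.
  by case/andP: (RD x xD).
set p1 := map (gfun m h) A0.
have Up1 : uniq p1.
  rewrite map_inj_in_uniq // => x y xA yA.
  by apply: (ltn_mono_inj (gfun_mono m1 hm)); rewrite inE PA.
have Sp1 : size p1 = i by rewrite size_map.
have Pp1 : is_perm i p1.
  apply: perm_of => // y /mapP [x xA ->]; rewrite /gfun.
  case: (eqVneq x h) => [_|xh]; first by move: i1; clear; lia.
  have xD : x \in D by rewrite /D (mem_rem_uniq h UA) inE xh.
  have := RD x xD; rewrite /N; clear; lia.
exists p1, B; split; last split.
- split => //; apply: (proj2 (avoids_bad Up1)) => bp1.
  apply: badpi; rewrite Epi; apply: (bad_subseq (prefix_subseq _ _)).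
  apply: (bad_map (gfun_mono m1 hm)) => //; apply/allP => x xA; rewrite inE; exact: PA.
- split; first exact: PB.
  apply: (proj2 (avoids_bad UB)) => bB; apply: badpi.
  apply: (bad_subseq _ bB); rewrite Epi /B -cat1s.
  apply: cat_subseq; first by rewrite sub1seq.
  exact: subseq_cons.
- rewrite star_eq Sp1 SB /= Epi /N; congr (_ ++ _).
  rewrite -map_comp; apply: map_id_in => x xA /=.
  rewrite /gfun; case: (eqVneq x h) => [->|xh]; first by apply: fstar1.
  have xD : x \in D by rewrite /D (mem_rem_uniq h UA) inE xh.
  have := RD x xD; rewrite /fstar; case: ifP => /eqP; move: m1; clear; lia.
Qed.


Lemma star_tau i m k p1 p2 : 1 <= i -> 1 <= m -> 1 <= k ->
  in_Sav i R12 p1 -> in_Sav m R12 p2 ->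
  tau k (star p1 p2) = tau k p1 + tau k.-1 p1 + tau k p2.
Proof.
move=> i1 m1 k1 H1 H2.
have [[Ps _] _] := star_wd i1 m1 H1 H2.
case: H1 H2 => [P1 _] [P2 _].
have [U1 S1 R1] := perm_facts P1.
have [U2 S2 R2] := perm_facts P2.
have [Us Ss Rs] := perm_facts Ps.
set h := head 0 p2; set C := behead p2.
have Ep2 : p2 = h :: C by rewrite /h /C; move: S2; clear -m1; case: p2 => //=; lia.
have hR : 0 < h <= m by apply: R2; rewrite Ep2 mem_head.
have CR : forall y, y \in C -> 0 < y <= m by move=> y yC; apply: R2; rewrite Ep2 inE yC orbT.
set f := fstar m h.
set A := map f p1.
have Es : star p1 p2 = A ++ (i + m) :: C by rewrite star_eq S1 S2.
have AR : forall x, x \in A -> (x == h) || (m < x < i + m).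
  by move=> x /mapP [y yp ->]; apply: fstar_range => //; apply: R1.
have UA : uniq A by move: Us; rewrite Es cat_uniq => /andP [].
have hA : h \in A.
  apply/mapP; exists 1; last by rewrite /f fstar1.
  by rewrite (perm_mem P1) mem_iota; move: i1; clear; lia.
have posP : forall s n, is_perm n s -> all (fun x => 0 < x) s.
  move=> s n /perm_facts [_ _ Rn]; apply/allP => x /Rn /andP [] //.
have gA : forall k lo, lo = 0 -> g k lo A = g k 0 p1.
  move=> k' lo ->; symmetry; apply: (g_map (fstar_mono m1 hR)).
    by apply/allP => x /R1 /andP [].
  move=> x; rewrite inE => x0; rewrite x0; symmetry.
  have : 0 < f x by rewrite /f /fstar; case: ifP => _; [case/andP: hR|rewrite addn_gt0 x0].
  by [].
case: k k1 => [//|k] _.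
rewrite /= tau_g; last exact: posP Ps.
rewrite [tau k.+1 p1]tau_g; last exact: posP P1.
rewrite [tau k.+1 p2]tau_g; last exact: posP P2.
have hm : h <= m by case/andP: hR.
have mN : m < i + m by move: m1 i1; clear; lia.
have CR' : forall y, y \in C -> y <= m by move=> y /CR /andP [].
have ARN := AR.
rewrite Es (g_star hm mN CR' UA ARN); last by move: m1 i1; clear; lia.
rewrite !gA // Ep2 /= hA.
case/andP: hR => -> _ /=.
case: k => [|k] /=.
  rewrite !g0 /tau /=; set a := g 1 0 p1; set b := g 1 0 C; move: a b; clear; lia.
rewrite tau_g; last exact: posP P1.
set a := g _ 0 p1; set b := g _ 0 p1; set c := g _ 0 C; set d := g _ h C; move: a b c d; clear; lia.
Qed.


Theorem mainTheorem9 (n i : nat) (hi1 : 1 <= i) (hi2 : i <= n - 1) :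
  (* well-defined into the target set *)
  (forall p1 p2, in_Sav i R12 p1 -> in_Sav (n - i) R12 p2 ->
     in_Sav n R12 (star p1 p2) /\ nth 0 (star p1 p2) i = n) /\
  (* injective *)
  (forall p1 p2 q1 q2, in_Sav i R12 p1 -> in_Sav (n - i) R12 p2 ->
     in_Sav i R12 q1 -> in_Sav (n - i) R12 q2 ->
     star p1 p2 = star q1 q2 -> p1 = q1 /\ p2 = q2) /\
  (* surjective onto {pi in S_n(R) | pi(i+1) = n} *)
  (forall pi, in_Sav n R12 pi -> nth 0 pi i = n ->
     exists p1 p2, in_Sav i R12 p1 /\ in_Sav (n - i) R12 p2 /\ star p1 p2 = pi) /\
  (* tau identity *)
  (forall k p1 p2, 1 <= k -> in_Sav i R12 p1 -> in_Sav (n - i) R12 p2 ->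
     tau k (star p1 p2) = tau k p1 + tau k.-1 p1 + tau k p2).
Proof.
have m1 : 1 <= n - i by move: hi1 hi2; clear; lia.
have E : i + (n - i) = n by move: hi1 hi2; clear; lia.
split; last split; last split.
- by move=> p1 p2 H1 H2; have := star_wd hi1 m1 H1 H2; rewrite E.
- by move=> p1 p2 q1 q2; apply: star_inj.
- by move=> pi; rewrite -{1}E => H; rewrite -{1}E; apply: star_surj.
- by move=> k p1 p2 k1; apply: star_tau.
Qed.
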